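(* Let $N$ be even, $f_c$ an integer with $n=2f_c+1\le N$, $r\ge1$ an integer with $f_c\ge128r$, $Q=Q_{\mathrm{flat,1D}}$, and $x\in\mathbb{R}_+^N$ with support in $\mathcal{R}_1(3.74r,r;N,n)$. Let $z\in\mathbb{R}^N$, $s=Qx+z$, and let $\hat x$ be a solution of $\min_{\hat x\in\mathbb{R}^N}\|s-Q\hat x\|_1$ subject to $\hat x\ge0$. Set $h=\hat x-x=(h_0,\dots,h_{N-1})^T$ and $\mathcal{T}=\{l/N: h_l<0\}$. Suppose there exist $q=(q_0,\dots,q_{N-1})^T\in\mathbb{R}^N$ and $0<\rho<1$ such that $Qq=q$, $\|q\|_\infty\le1$, $q_l=0$ whenever $l/N\in\mathcal{T}$, and $q_l>2\rho$ otherwise. Then $$\|\hat x-x\|_1\le\frac{2(1-\rho)}{\rho}\,\|z\|_1.$$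
   Context: $F\in\mathbb{C}^{N\times N}$ is the DFT matrix $[F]_{k,l}=N^{-1/2}e^{-i2\pi kl/N}$, $k\in\{-N/2+1,\dots,N/2\}$, $l\in\{0,\dots,N-1\}$. $Q_{\mathrm{flat,1D}}=F^H\mathrm{diag}(\hat p_{-N/2+1},\dots,\hat p_{N/2})F$ with $\hat p_k=1$ for $|k|\le f_c$ and $0$ otherwise. $\lambda_c=1/f_c$. Entry $x_l$ is identified with the point $l/N$ of $\mathbb{T}=\mathbb{R}/\mathbb{Z}$, and the support of $x$ is the set of such points where $x_l\neq0$. A set $\mathcal{T}\subset\{0,1/N,\dots,1-1/N\}$ belongs to $\mathcal{R}_1(d,r;N,n)$ if it can be partitioned into $r$ pairwise disjoint subsets $\mathcal{T}_1,\dots,\mathcal{T}_r$ such that each interval of $\mathbb{T}$ of length $d\lambda_c/2$ contains at most one point of each $\mathcal{T}_i$. *)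

(* Defs.v *)
From HB Require Import structures.
From mathcomp Require Import all_boot all_order all_algebra.
From mathcomp Require Import reals trigo.
From mathcomp Require Import complex.
Set Implicit Arguments. Unset Strict Implicit. Unset Printing Implicit Defensive.
Import Order.TTheory GRing.Theory Num.Theory.
Local Open Scope ring_scope.

Section Defs.
Variable R : realType.
Variable N : nat.

(* frequency index k in {-N/2+1, ..., N/2} attached to row j : 'I_N *)
Definition freq (j : 'I_N) : int := (j : nat)%:Z + 1 - (N %/ 2)%:Z.

Definition dft : 'M[R[i]]_N :=
  \matrix_(j, l)
    let th := 2 * pi * (freq j)%:~R * (l : nat)%:R / N%:R in
    ((Num.sqrt (N%:R : R))^-1)%:C%C * Complex (cos th) (- sin th).

Definition adjmx (A : 'M[R[i]]_N) : 'M[R[i]]_N := map_mx (@conjc R) A^T.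

Definition phat (fc : nat) (j : 'I_N) : R :=
  if (`|freq j| <= fc%:Z)%R then 1 else 0.

Definition Qflat (fc : nat) : 'M[R[i]]_N :=
  adjmx dft *m diag_mx (\row_j ((phat fc j)%:C)%C) *m dft.

Definition realv (v : 'cV[R]_N) : 'cV[R[i]]_N := map_mx (fun a => (a%:C)%C) v.

Definition l1c (v : 'cV[R[i]]_N) : R := \sum_l Normc.normc (v l 0).
Definition l1 (v : 'cV[R]_N) : R := \sum_l `|v l 0|.

Definition pt (l : 'I_N) : R := (l : nat)%:R / N%:R.

(* t lies in the (closed) arc of T starting at a of length L *)
Definition in_arc (a L t : R) : bool :=
  let u := t - a - (Num.floor (t - a))%:~R in (0 <= u) && (u <= L).

Definition supp (v : 'cV[R]_N) : {set 'I_N} := [set l | v l 0 != 0].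

(* T belongs to R_1(d, r; N, n), with lambda_c = 1/fc: T can be partitioned
   into r pairwise disjoint classes (given by a class map c) such that every
   arc of length d*lambda_c/2 contains at most one point of each class. *)
Definition inR1 (fc : nat) (d : R) (r : nat) (T : {set 'I_N}) : Prop :=
  exists c : 'I_N -> 'I_r,
    forall (a : R) (l1 l2 : 'I_N),
      l1 \in T -> l2 \in T -> c l1 = c l2 ->
      in_arc a (d * (fc%:R)^-1 / 2) (pt l1) ->
      in_arc a (d * (fc%:R)^-1 / 2) (pt l2) -> l1 = l2.

End Defs.

(* Main.v *)
Require Import Defs.
From HB Require Import structures.
From mathcomp Require Import all_boot all_order all_algebra.
From mathcomp Require Import reals trigo.
From mathcomp Require Import complex.
From mathcomp Require Import ring lra zify.
Import Order.TTheory GRing.Theory Num.Theory.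
Local Open Scope ring_scope.

Lemma normc_sum (R : realType) (I : finType) (F : I -> R[i]) :
  Normc.normc (\sum_i F i) <= \sum_i Normc.normc (F i).
Proof.
elim/big_rec2: _ => [|i y1 y2 _ IH]; first by rewrite Normc.normc0.
exact: le_trans (le_normcD _ _) (lerD (lexx _) IH).
Qed.

Lemma normc_ge0 (R : realType) (a : R[i]) : 0 <= Normc.normc a.
Proof. by case: a => a b; rewrite /= sqrtr_ge0. Qed.

Lemma normcR (R : realType) (a : R) : Normc.normc (a%:C)%C = `|a|.
Proof. by rewrite /= expr0n /= addr0 sqrtr_sqr. Qed.

Lemma conj_real_mx (R : realType) N (v : 'cV[R]_N) :
  map_mx (@conjc R) (realv v) = realv v.
Proof. by apply/matrixP => i j; rewrite !mxE conjc_real. Qed.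

Lemma conjmxK (R : realType) m n (A : 'M[R[i]]_(m,n)) :
  map_mx (@conjc R) (map_mx (@conjc R) A) = A.
Proof. by apply/matrixP => i j; rewrite !mxE conjcK. Qed.

Lemma QT (R : realType) N fc :
  (Qflat R N fc)^T = map_mx (@conjc R) (Qflat R N fc).
Proof.
rewrite /Qflat !map_mxM !trmx_mul /adjmx map_trmx trmxK conjmxK tr_diag_mx.
have -> : map_mx (@conjc R) (diag_mx (\row_(j < N) ((phat R fc j)%:C)%C))
          = diag_mx (\row_(j < N) ((phat R fc j)%:C)%C).
  apply/matrixP => i j; rewrite !mxE; case: (i == j); rewrite /= ?mulr0n ?mulr1n ?conjc_real //.
  all: rewrite /= ?oppr0 //.
by rewrite mulmxA.
Qed.

Lemma herm (R : realType) N fc (v h : 'cV[R]_N) :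
  Qflat R N fc *m realv v = realv v ->
  (realv v)^T *m (Qflat R N fc *m realv h) = (realv v)^T *m realv h.
Proof.
move=> Hv; rewrite mulmxA; congr (_ *m _).
rewrite -[(realv v)^T *m _]trmxK trmx_mul trmxK QT.
by rewrite -conj_real_mx -map_mxM Hv conj_real_mx.
Qed.
Definition ee {R : realType} (t : R) : R[i] := Complex (cos t) (- sin t).

Lemma eeD (R : realType) (a b : R) : ee (a + b) = ee a * ee b.
Proof. rewrite /ee cosD sinD /=. congr Complex; ring. Qed.

Lemma ee0 (R : realType) : ee (0 : R) = 1.
Proof. by rewrite /ee cos0 sin0 oppr0. Qed.

Lemma eeMn (R : realType) (t : R) n : ee (n%:R * t) = ee t ^+ n.
Proof.
elim: n => [|n IH]; first by rewrite mul0r ee0 expr0.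
by rewrite -natr1 mulrDl mul1r eeD IH exprSr.
Qed.

Lemma ee2pik (R : realType) (k : int) : ee (2 * pi * k%:~R : R) = 1.
Proof.
have H : forall n : nat, ee (2 * pi * n%:R : R) = 1.
  move=> n; have -> : (2 * pi * n%:R : R) = 0 + (pi *+ 2) *+ n.
    by rewrite add0r -mulr_natr mulr2n; ring.
  by rewrite /ee (periodicn (@cosD2pi R)) (periodicn (@sinD2pi R)) -/(ee 0) ee0.
case: k => n; first exact: H.
rewrite NegzE mulrN /ee cosN sinN opprK.
have := H n.+1; rewrite /ee; case=> -> /eqP; rewrite oppr_eq0 => /eqP -> //.
Qed.

Lemma ee_neq1 (R : realType) (t : R) : 0 < `|t| <= pi -> ee t != 1.
Proof.
move=> /andP[t0 tpi]; apply/negP => /eqP [Hc _].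
have : cos `|t| < cos 0.
  rewrite ltr_cos // in_itv /= ?lexx ?pi_ge0 //.
  by rewrite normr_ge0 tpi.
by rewrite cos_norm Hc cos0 ltxx.
Qed.

Lemma geo_sum (R : realType) (w : R[i]) n : w ^+ n = 1 -> w != 1 -> \sum_(i < n) w ^+ i = 0.
Proof.
move=> Hn Hw; have := subrX1 w n; rewrite Hn subrr => /esym/eqP.
by rewrite mulf_eq0 subr_eq0 (negbTE Hw) /= => /eqP.
Qed.

Lemma dft_row_sum (R : realType) (N : nat) (j : 'I_N) : ~~ odd N ->
  \sum_l dft R N j l = if freq j == 0 then (((Num.sqrt (N%:R : R))^-1)%:C)%C * N%:R else 0.
Proof.
move=> Nev.
have N0 : (0 < N)%N by case: N j {Nev} => [[]|].
set c := (((Num.sqrt (N%:R : R))^-1)%:C)%C.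
set th := 2 * pi * (freq j)%:~R / (N%:R : R).
have E : forall l : 'I_N, dft R N j l = c * ee th ^+ l.
  move=> l; rewrite mxE -eeMn /ee; congr (_ * Complex (cos _) (- sin _)); rewrite /th; ring.
rewrite (eq_bigr _ (fun l _ => E l)) -mulr_sumr.
case: eqP => [k0|k0].
  rewrite /th k0 mulr0 mul0r ee0 (eq_bigr (fun _ => 1)) ?sumr_const ?card_ord //.
  by move=> l _; rewrite expr1n.
rewrite geo_sum ?mulr0 //.
  rewrite -eeMn /th; have NR : (N%:R : R) != 0 by rewrite pnatr_eq0 -lt0n.
  have -> : (N%:R * (2 * pi * (freq j)%:~R / N%:R) : R) = 2 * pi * (freq j)%:~R by field.
  by rewrite ee2pik.
apply: ee_neq1.
have Npos : (0 : R) < N%:R by rewrite ltr0n.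
have -> : `|th| = 2 * pi * (`|freq j|)%:~R / N%:R.
  rewrite /th !normrM normfV intr_norm (ger0_norm (ltW Npos)) (ger0_norm (@pi_ge0 R)).
  by rewrite (@ger0_norm _ 2).
have kpos : (0 < `|freq j|)%R by rewrite normr_gt0; apply/eqP.
have kle : (2 * `|freq j| <= N%:Z)%R.
  move: (ltn_ord j) Nev; rewrite /freq; move: (nat_of_ord j) => m.
  have := divn_eq N 2; have := ltn_pmod N (isT : (0 < 2)%N).
  rewrite -[odd N]/(odd N) modn2. lia.
apply/andP; split.
  apply: divr_gt0 => //; apply: mulr_gt0; first by apply: mulr_gt0 => //; exact: pi_gt0.
  by rewrite ltr0z.
rewrite ler_pdivrMr //.
have : ((2 * `|freq j|)%:~R <= (N%:Z)%:~R :> R) by rewrite ler_int.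
rewrite intrM => H2.
have -> : 2 * pi * `|freq j|%:~R = pi * (2 * `|freq j|%:~R) :> R by ring.
by rewrite ler_pM2l ?pi_gt0.
Qed.

Lemma Q1 (R : realType) (N fc : nat) : ~~ odd N -> (0 < N)%N ->
  Qflat R N fc *m (const_mx 1 : 'cV[R[i]]_N) = const_mx 1.
Proof.
move=> Nev N0.
set c := (((Num.sqrt (N%:R : R))^-1)%:C)%C.
have hj0 : (N %/ 2 - 1 < N)%N by lia.
set j0 : 'I_N := Ordinal hj0.
have fj0 : freq j0 = 0 by rewrite /freq /=; lia.
have fj : forall j : 'I_N, freq j = 0 -> j = j0.
  move=> j; rewrite /freq => H; apply: val_inj => /=; lia.
have V : forall j i, (dft R N *m (const_mx 1 : 'cV[R[i]]_N)) j i = if freq j == 0 then c * N%:R else 0.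
  move=> j i; rewrite mxE -(dft_row_sum R N j Nev); apply: eq_bigr => l _; rewrite [const_mx _ _ _]mxE mulr1 //.
rewrite /Qflat -!mulmxA mul_diag_mx.
apply/matrixP => m i; rewrite [LHS]mxE (bigD1 j0) //= big1; last first.
  move=> j /eqP jj0; rewrite [X in _ * X]mxE V.
  case: eqP => [/fj //|_]; by rewrite !mulr0.
rewrite addr0 [X in _ * X]mxE V fj0 eqxx mxE /phat fj0 normr0 lez_nat leq0n.
rewrite !mxE fj0 mulr0 !mul0r /= cos0 sin0 oppr0.
rewrite /c /= mulr1 !mul0r subr0 mulr0 addr0 oppr0.
have -> : (N%:R : R[i]) = ((N%:R : R)%:C)%C by rewrite rmorph_nat.
rewrite -[((_ +i* 0)%C)]/(((Num.sqrt (N%:R : R))^-1)%:C)%C -!rmorphM /=. congr (_%:C)%C.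
have sN : Num.sqrt (N%:R : R) ^+ 2 = N%:R by rewrite sqr_sqrtr ?ler0n.
have sN0 : Num.sqrt (N%:R : R) != 0 by rewrite sqrtr_eq0 -ltNge ltr0n.
rewrite mul1r mulrA -expr2 exprVn sN mulVf //.
by rewrite pnatr_eq0 -lt0n.
Qed.
Lemma supp_not_full (R : realType) (N fc r : nat) (x : 'cV[R]_N) :
  (2 * fc + 1 <= N)%N -> (1 <= r)%N -> (128 * r <= fc)%N ->
  @inR1 R N fc (374%:R / 100%:R * r%:R) r (supp x) ->
  exists l, x l 0 = 0.
Proof.
move=> HN r1 Hfc [c Hc].
case: (pickP (fun l => x l 0 == 0)) => [l /eqP H | H]; first by exists l.
exfalso.
have gP : forall i : 'I_r.+1, (i < N)%N by move=> i; have := ltn_ord i; lia.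
pose g (i : 'I_r.+1) : 'I_N := Ordinal (gP i).
have fc0 : (0 : R) < fc%:R by rewrite ltr0n; lia.
have N0 : (0 : R) < N%:R by rewrite ltr0n; lia.
have arc : forall i : 'I_r.+1, in_arc 0 (374%:R / 100%:R * r%:R * (fc%:R)^-1 / 2) (pt R (g i)).
  move=> i; rewrite /in_arc /pt /= !subr0.
  have t0 : 0 <= (i%:R : R) / N%:R by rewrite divr_ge0 // ler0n.
  have t1 : (i%:R : R) / N%:R < 1 by rewrite ltr_pdivrMr // mul1r ltr_nat.
  rewrite (@floor_def _ _ 0) ?subr0 /=; last first.
    by rewrite add0r mulr1z; apply/andP; split; [exact: t0 | exact: t1].
  apply/andP; split; first exact: t0.
  have -> : (374%:R / 100%:R * r%:R * (fc%:R)^-1 / 2 : R) = (374 * r)%:R / (200 * fc)%:R.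
    rewrite !natrM; field; rewrite pnatr_eq0; lia.
  rewrite ler_pdivrMr // mulrAC ler_pdivlMr ?ltr0n; last lia.
  rewrite -!natrM ler_nat.
  have := ltn_ord i; rewrite ltnS => ir.
  have : (i * fc <= r * N)%N by apply: leq_mul => //; lia.
  lia.
have inj : injective (fun i => c (g i)).
  move=> i j Hij; apply: val_inj.
  have := Hc 0 (g i) (g j); rewrite !inE !H => /(_ isT isT Hij (arc i) (arc j)).
  by move/(congr1 val).
have := leq_card _ inj; rewrite !card_ord; lia.
Qed.

Theorem lemma1 (R : realType) (N fc r : nat) (x z xhat q : 'cV[R]_N) (rho : R) :
  ~~ odd N -> (2 * fc + 1 <= N)%N -> (1 <= r)%N -> (128 * r <= fc)%N ->
  (forall l, 0 <= x l 0) ->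
  @inR1 R N fc (374%:R / 100%:R * r%:R) r (supp x) ->
  let Q := Qflat R N fc in
  let s := Q *m realv x + realv z in
  (forall l, 0 <= xhat l 0) ->
  (forall y : 'cV[R]_N, (forall l, 0 <= y l 0) ->
     l1c (s - Q *m realv xhat) <= l1c (s - Q *m realv y)) ->
  let h := xhat - x in
  0 < rho < 1 ->
  Q *m realv q = realv q ->
  (forall l, `|q l 0| <= 1) ->
  (forall l, h l 0 < 0 -> q l 0 = 0) ->
  (forall l, ~~ (h l 0 < 0) -> 2 * rho < q l 0) ->
  l1 (xhat - x) <= 2 * (1 - rho) / rho * l1 z.
Proof.
move=> Nev HN r1 Hfc x0 HR Q s xh0 Hopt h /andP[rho0 rho1] Qq qle qT qnT.
have N0 : (0 < N)%N by lia.
have [l0 xl0] := supp_not_full _ _ _ _ _ HN r1 Hfc HR.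
have rhoh : 2 * rho <= 1.
  have : ~~ (h l0 0 < 0) by rewrite /h !mxE xl0 subr0 -leNgt.
  move/qnT => H; apply: le_trans (ltW H) _.
  exact: le_trans (ler_norm _) (qle l0).
have hE : h = xhat - x by [].
clearbody h; rewrite -hE.
have rhoK : 1 <= (1 - rho) / rho by rewrite ler_pdivlMr // mul1r; lra.
set K := (1 - rho) / rho.
pose v : 'cV[R]_N := \col_l (q l 0 / rho - 1).
have rv : realv v = ((rho^-1)%:C)%C *: realv q - const_mx 1.
  apply/matrixP => i j; rewrite !mxE (ord1 j) /= rmorphB rmorphM /= mulrC.
  by rewrite rmorph1.
have Qv : Q *m realv v = realv v.
  by rewrite rv mulmxBr -scalemxAr Qq /Q Q1.
set u := Q *m realv h.
have Hh := herm _ _ _ _ h Qv; rewrite -/Q -/u in Hh.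
have E : ((realv v)^T *m u) 0 0 = ((realv v)^T *m realv h) 0 0 by rewrite Hh.
rewrite !mxE in E.
have S1 : l1 h <= \sum_l v l 0 * h l 0.
  rewrite /l1; apply: ler_sum => l _; rewrite /v mxE.
  case: (ltP (h l 0) 0) => Hl.
    by rewrite qT // mul0r sub0r mulN1r ltr0_norm.
  rewrite ger0_norm //; apply: ler_peMl => //.
  have := qnT l; rewrite -leNgt Hl => /(_ isT) Hq.
  rewrite lerBrDr ler_pdivlMr //; lra.
have S2 : ((\sum_l v l 0 * h l 0)%:C)%C = \sum_l (realv v)^T 0 l * u l 0.
  rewrite E rmorph_sum; apply: eq_bigr => l _; rewrite !mxE rmorphM //.
have vK : forall l, `|v l 0| <= K.
  move=> l; rewrite /v mxE.
  case: (ltP (h l 0) 0) => Hl.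
    by rewrite qT // mul0r sub0r normrN1.
  have := qnT l; rewrite -leNgt Hl => /(_ isT) Hq.
  have q1 : q l 0 <= 1 by exact: le_trans (ler_norm _) (qle l).
  have -> : q l 0 / rho - 1 = (q l 0 - rho) / rho by field; rewrite gt_eqF.
  rewrite ger0_norm; last by rewrite divr_ge0 //; lra.
  by rewrite /K ler_pM2r ?invr_gt0 //; lra.
have S3 : \sum_l v l 0 * h l 0 <= K * l1c u.
  apply: le_trans (ler_norm _) _; rewrite -normcR S2.
  apply: le_trans (normc_sum _ _ _) _; rewrite /l1c mulr_sumr; apply: ler_sum => l _.
  rewrite !mxE Normc.normcM normcR; apply: ler_wpM2r; last first.
    have := vK l; rewrite /v mxE => H; apply: le_trans H _; exact: lexx.
  case: (\sum_j _) => a b; exact: sqrtr_ge0.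
have realvB : forall a b : 'cV[R]_N, realv (a - b) = realv a - realv b.
  by move=> a b; apply/matrixP => i j; rewrite !mxE rmorphB.
have S4 : l1c u <= 2 * l1 z.
  have H := Hopt x x0.
  have e1 : s - Q *m realv x = realv z.
    by rewrite /s addrAC subrr add0r.
  have e2 : s - Q *m realv xhat = realv z - u.
    by rewrite /u hE /s realvB mulmxBr opprB addrCA addrA.
  rewrite e1 e2 in H.
  have ez : l1c (realv z) = l1 z.
    by apply: eq_bigr => l _; rewrite mxE normcR.
  have : l1c u <= l1c (realv z) + l1c (realv z - u).
    rewrite /l1c -big_split; apply: ler_sum => l _.
    have := le_normcD (realv z l 0) (- (realv z - u) l 0).
    have -> : realv z l 0 + - (realv z - u) l 0 = u l 0.
      by rewrite [(realv z - u) l 0]mxE [(- u) l 0]mxE opprD opprK addrA subrr add0r.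
    by rewrite normcN.
  move=> Hs; rewrite ez in H Hs; apply: le_trans Hs _.
  have -> : 2 * l1 z = l1 z + l1 z by ring.
  by rewrite lerD2l.
have K0 : 0 <= K by apply: le_trans _ rhoK.
have : l1 h <= K * (2 * l1 z).
  apply: le_trans S1 _; apply: le_trans S3 _; exact: ler_wpM2l.
have -> : 2 * (1 - rho) / rho * l1 z = K * (2 * l1 z) by rewrite /K; ring.
done.
Qed.
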